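(* Let $B$ be a skew brace with multiplicative identity $1$ and $\mathrm{T}(B)$ its associated near-truss. Let $P$ be a non-empty subset of $B$. Then $P$ is a paragon in $\mathrm{T}(B)$ if and only if, for all $p\in P$, the set $P_p^1:=\{[q,p,1]\mid q\in P\}=\{q-p+1\mid q\in P\}$ is an ideal in $B$.
   Context: A skew brace is $(B,+,\cdot)$ with $(B,+)$ and $(B,\cdot)$ groups and $a(b+c)=ab-a+ac$. An ideal of a skew brace $B$ is a subset $B'$ such that $(B',+)$ is a normal subgroup of $(B,+)$, $aB'=B'a$ for all $a\in B$, and $ab-a\in B'$ for all $a\in B$, $b\in B'$. $\mathrm{T}(B)$ is $B$ with ternary operation $[a,b,c]=a-b+c$ and the multiplication of $B$. A normal sub-heap is a non-empty subset $S$ closed under $[-,-,-]$ with $[[a,e,s],a,e]\in S$ for all $a$ and $e,s\in S$; $a\sim_S b$ iff $[a,b,s]\in S$ for some (equivalently all) $s\in S$. A sub-heap $S$ is closed if $[ts',ts,s]\in S$ and $[s't,st,s]\in S$ for all $s,s'\in S$, $t$. A paragon is a non-empty normal sub-heap $P$ all of whose $\sim_P$-classes are closed sub-heaps. *)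

(* Defs.v *)
Set Implicit Arguments.

Record skew_brace := SkewBrace {
  car :> Type;
  sadd : car -> car -> car;
  sopp : car -> car;
  szero : car;
  smul : car -> car -> car;
  sinv : car -> car;
  sone : car;
  sadd_assoc : forall a b c, sadd a (sadd b c) = sadd (sadd a b) c;
  sadd_0l : forall a, sadd szero a = a;
  sadd_0r : forall a, sadd a szero = a;
  sadd_Nl : forall a, sadd (sopp a) a = szero;
  sadd_Nr : forall a, sadd a (sopp a) = szero;
  smul_assoc : forall a b c, smul a (smul b c) = smul (smul a b) c;
  smul_1l : forall a, smul sone a = a;
  smul_1r : forall a, smul a sone = a;
  smul_Vl : forall a, smul (sinv a) a = sone;
  smul_Vr : forall a, smul a (sinv a) = sone;
  sbrace : forall a b c,
    smul a (sadd b c) = sadd (sadd (smul a b) (sopp a)) (smul a c)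
}.

Arguments sadd {s} _ _.
Arguments sopp {s} _.
Arguments smul {s} _ _.
Arguments sinv {s} _.

Section Defs.
Variable B : skew_brace.

Definition subset := B -> Prop.

Definition is_ideal (I : subset) : Prop :=
  I (szero B) /\
  (forall x y, I x -> I y -> I (sadd x y)) /\
  (forall x, I x -> I (sopp x)) /\
  (forall a x, I x -> I (sadd (sadd a x) (sopp a))) /\
  (forall a, forall y, (exists x, I x /\ y = smul a x) <->
                       (exists x, I x /\ y = smul x a)) /\
  (forall a b, I b -> I (sadd (smul a b) (sopp a))).

Definition tern (a b c : B) : B := sadd (sadd a (sopp b)) c.

Definition sub_heap (S : subset) : Prop :=
  forall a b c, S a -> S b -> S c -> S (tern a b c).

Definition normal_sub_heap (S : subset) : Prop :=
  (exists s, S s) /\ sub_heap S /\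
  (forall a e s, S e -> S s -> S (tern (tern a e s) a e)).

Definition heap_rel (S : subset) (a b : B) : Prop :=
  exists s, S s /\ S (tern a b s).

Definition closed_sub_heap (S : subset) : Prop :=
  sub_heap S /\
  (forall s s' t, S s -> S s' ->
     S (tern (smul t s') (smul t s) s) /\ S (tern (smul s' t) (smul s t) s)).

Definition heap_class (S : subset) (a : B) : subset := fun b => heap_rel S b a.

Definition paragon (P : subset) : Prop :=
  normal_sub_heap P /\ (forall a, closed_sub_heap (heap_class P a)).

Definition P_p1 (P : subset) (p : B) : subset :=
  fun x => exists q, P q /\ x = tern q p (sone B).

End Defs.

(* Main.v *)
Require Import Defs.

Local Notation "a ⊕ b" := (sadd a b) (at level 50, left associativity).
Local Notation "⊖ a" := (sopp a) (at level 35).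
Local Notation "a ⊙ b" := (smul a b) (at level 40, left associativity).

Section G.
Variable B : skew_brace.
Local Notation "0" := (szero B).

Lemma addA' (a b c : B) : (a ⊕ b) ⊕ c = a ⊕ (b ⊕ c).
Proof. symmetry; apply sadd_assoc. Qed.
Lemma addKl (a b : B) : ⊖ a ⊕ (a ⊕ b) = b.
Proof. rewrite sadd_assoc, sadd_Nl, sadd_0l; reflexivity. Qed.
Lemma addNKl (a b : B) : a ⊕ (⊖ a ⊕ b) = b.
Proof. rewrite sadd_assoc, sadd_Nr, sadd_0l; reflexivity. Qed.
Lemma add_uniq (a b : B) : a ⊕ b = 0 -> b = ⊖ a.
Proof. intro E. rewrite <- (addKl a b), E, sadd_0r. reflexivity. Qed.
Lemma oppK (a : B) : ⊖ (⊖ a) = a.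
Proof. symmetry; apply add_uniq, sadd_Nl. Qed.
Lemma oppD (a b : B) : ⊖ (a ⊕ b) = ⊖ b ⊕ ⊖ a.
Proof. symmetry; apply add_uniq. rewrite addA', (sadd_assoc _ b), sadd_Nr, sadd_0l, sadd_Nr. reflexivity. Qed.
Lemma opp0 : ⊖ 0 = 0.
Proof. symmetry; apply add_uniq, sadd_0l. Qed.
Lemma one_eq_zero : sone B = 0.
Proof.
  pose proof (sbrace _ (sone B) 0 0) as E.
  rewrite !smul_1l, sadd_0l, sadd_0l, sadd_0r in E.
  rewrite <- (oppK (sone B)), <- E, opp0. reflexivity.
Qed.
Lemma smul_0r (a : B) : a ⊙ 0 = a.
Proof.
  pose proof (sbrace _ a 0 0) as E. rewrite sadd_0l in E.
  assert (E2 : (a ⊙ 0) ⊕ ⊖ (a ⊙ 0) = (a ⊙ 0 ⊕ ⊖ a ⊕ a ⊙ 0) ⊕ ⊖ (a ⊙ 0)) by (rewrite <- E; reflexivity).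
  rewrite sadd_Nr, !addA', sadd_Nr, sadd_0r in E2.
  symmetry in E2. apply add_uniq in E2. rewrite <- (oppK (a ⊙ 0)), <- E2, oppK. reflexivity.
Qed.
Lemma smul_0l (a : B) : 0 ⊙ a = a.
Proof. rewrite <- one_eq_zero. apply smul_1l. Qed.
End G.

Hint Rewrite addA' addKl addNKl sadd_Nr sadd_Nl sadd_0l sadd_0r oppK oppD opp0 one_eq_zero smul_0r smul_0l : grp.
Ltac gs := autorewrite with grp in *.

Section K.
Variable B : skew_brace.
Variable P : B -> Prop.
Variable p : B.
Hypothesis Pp : P p.
Local Notation "0" := (szero B).
Let H x := P (x ⊕ p).

Lemma SH_of_ideal : is_ideal H -> sub_heap P.
Proof.
  intros (H0 & HD & HN & Hc & Hl & Hlam) a b c Pa Pb Pc.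
  assert (Ha : H (a ⊕ ⊖ p)) by (unfold H; gs; auto).
  assert (Hb : H (b ⊕ ⊖ p)) by (unfold H; gs; auto).
  assert (Hc' : H (c ⊕ ⊖ p)) by (unfold H; gs; auto).
  pose proof (HD _ _ (HD _ _ Ha (HN _ Hb)) Hc') as X.
  unfold H, tern in *; gs; auto.
Qed.

Lemma cls (SH : sub_heap P) a b : heap_class P a b <-> H (b ⊕ ⊖ a).
Proof.
  unfold heap_class, heap_rel, H; split.
  - intros (s & Ps & Q). pose proof (SH _ _ _ Q Ps Pp) as X. unfold tern in X. gs. auto.
  - intro X. exists p; split; [exact Pp|]. unfold tern; gs; auto.
Qed.

Lemma key : paragon P <-> is_ideal H.
Proof.
  split.
  - intros ((_ & SH & NC) & CL).
    assert (HD : forall x y, H x -> H y -> H (x ⊕ y)).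
    { unfold H; intros x y Hx Hy. pose proof (SH _ _ _ Hx Pp Hy) as X. unfold tern in X; gs; auto. }
    assert (HN : forall x, H x -> H (⊖ x)).
    { unfold H; intros x Hx. pose proof (SH _ _ _ Pp Hx Pp) as X. unfold tern in X; gs; auto. }
    assert (Hc : forall a x, H x -> H (a ⊕ x ⊕ ⊖ a)).
    { unfold H; intros a x Hx. pose proof (NC (a ⊕ p) _ _ Pp Hx) as X. unfold tern in X; gs; auto. }
    assert (H0 : H 0) by (unfold H; gs; auto).
    destruct (CL 0) as [_ CL0].
    assert (Hlam : forall a b, H b -> H (a ⊙ b ⊕ ⊖ a)).
    { intros a b Hb. assert (A0 : heap_class P 0 0) by (apply cls; auto; gs; auto).
      assert (Ab : heap_class P 0 b) by (apply cls; auto; gs; auto).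
      destruct (CL0 _ _ a A0 Ab) as [X _].
      apply cls in X; auto. unfold tern in X. gs. auto. }
    assert (Hrho : forall a b, H b -> H (b ⊙ a ⊕ ⊖ a)).
    { intros a b Hb. assert (A0 : heap_class P 0 0) by (apply cls; auto; gs; auto).
      assert (Ab : heap_class P 0 b) by (apply cls; auto; gs; auto).
      destruct (CL0 _ _ a A0 Ab) as [_ X].
      apply cls in X; auto. unfold tern in X. gs. auto. }
    split; [auto|split; [auto|split; [auto|split; [auto|split]]]]; auto.
    intros a y; split.
    + intros (x & Hx & ->).
      exists (a ⊙ (x ⊙ sinv a)). split.
      * pose proof (sbrace _ a (x ⊙ sinv a ⊕ ⊖ sinv a) (sinv a)) as E.
        rewrite smul_Vr in E. gs. rewrite E. apply Hlam, Hrho, Hx.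
      * rewrite <- !smul_assoc, smul_Vl, smul_1r. reflexivity.
    + intros (x & Hx & ->).
      exists (sinv a ⊙ (x ⊙ a)). split.
      * pose proof (sbrace _ (sinv a) (x ⊙ a ⊕ ⊖ a) a) as E.
        rewrite smul_Vl in E. gs. rewrite E. apply Hlam, Hrho, Hx.
      * rewrite !smul_assoc, smul_Vr, smul_1l. reflexivity.
  - intro I. pose proof (SH_of_ideal I) as SH.
    destruct I as (H0 & HD & HN & Hc & Hl & Hlam).
    assert (toH : forall q, P q -> H (q ⊕ ⊖ p)) by (intros; unfold H; gs; auto).
    split; [split; [exists p; auto | split; [exact SH|]]|].
    + intros a e s Pe Ps.
      pose proof (HD _ _ (Hc (a ⊕ ⊖ e) _ (HD _ _ (toH _ Ps) (HN _ (toH _ Pe)))) (toH _ Pe)) as X.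
      unfold H, tern in *; gs; auto.
    + intro a. split.
      * intros b1 b2 b3 X1 X2 X3. apply cls in X1, X2, X3; auto. apply cls; auto.
        pose proof (HD _ _ (HD _ _ X1 (HN _ X2)) X3) as X. unfold tern; gs; auto.
      * intros s s' t Xs Xs'. apply cls in Xs, Xs'; auto.
        assert (Hh : H (s' ⊕ ⊖ s)) by (pose proof (HD _ _ Xs' (HN _ Xs)) as X; gs; auto).
        split; apply cls; auto; unfold tern.
        -- pose proof (sbrace _ t (s' ⊕ ⊖ s) s) as E. gs. rewrite E.
           pose proof (HD _ _ (Hlam t _ Hh) Xs) as X. gs. auto.
        -- set (k := sinv s ⊙ s').
           assert (Hk : H k).
           { pose proof (sbrace _ (sinv s) s (⊖ s ⊕ s')) as E. rewrite smul_Vl in E. gs.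
             unfold k; rewrite E.
             pose proof (Hc (⊖ sinv s) _ (Hlam (sinv s) _ (Hc (⊖ s) _ Hh))) as X. gs. auto. }
           destruct (proj2 (Hl t (k ⊙ t)) (ex_intro _ k (conj Hk eq_refl))) as (x' & Hx' & E).
           assert (E2 : s' ⊙ t = s ⊙ t ⊙ x').
           { replace s' with (s ⊙ k) by (unfold k; rewrite smul_assoc, smul_Vr, smul_1l; reflexivity).
             rewrite <- smul_assoc, E, smul_assoc. reflexivity. }
           rewrite E2. pose proof (HD _ _ (Hlam (s ⊙ t) _ Hx') Xs) as X. gs. auto.
Qed.
End K.

Lemma is_ideal_ext (B : skew_brace) (I J : B -> Prop) :
  (forall x, I x <-> J x) -> is_ideal I -> is_ideal J.
Proof.
  intros E (H0 & HD & HN & Hc & Hl & Hlam).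
  split; [apply E; auto|].
  split; [intros x y a b; apply E; apply HD; apply E; auto|].
  split; [intros x a; apply E; apply HN; apply E; auto|].
  split; [intros a x b; apply E; apply Hc; apply E; auto|].
  split; [|intros a b c; apply E; apply Hlam; apply E; auto].
  intros a y; split.
  - intros (x & Jx & ->). destruct (proj1 (Hl a (a ⊙ x))) as (z & Iz & Ez).
    + exists x; split; [apply E|]; auto.
    + exists z; split; [apply E|]; auto.
  - intros (x & Jx & ->). destruct (proj2 (Hl a (x ⊙ a))) as (z & Iz & Ez).
    + exists x; split; [apply E|]; auto.
    + exists z; split; [apply E|]; auto.
Qed.

Lemma P_p1_iff (B : skew_brace) (P : B -> Prop) p x : P_p1 P p x <-> P (x ⊕ p).
Proof.
  unfold P_p1, tern; split.
  - intros (q & Pq & ->). gs. auto.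
  - intro X. exists (x ⊕ p); split; auto. gs. reflexivity.
Qed.

Theorem lemma3p16 (B : skew_brace) (P : B -> Prop) (hP : exists x, P x) :
  paragon P <-> (forall p, P p -> is_ideal (P_p1 P p)).
Proof.
  split.
  - intros Par p Pp. apply (is_ideal_ext _ (fun x => P (x ⊕ p))).
    + intro x; apply iff_sym, P_p1_iff.
    + apply (key B P p Pp); auto.
  - intro Hi. destruct hP as (p & Pp). apply (key B P p Pp).
    apply (is_ideal_ext _ (P_p1 P p)); [apply P_p1_iff | auto].
Qed.
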